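(* Let $A$ be a Banach algebra with a central bounded approximate identity. Then every approximately semi-inner derivation from $A$ into a Banach $A$-bimodule is approximately inner. In particular, this holds when $A$ is unital.
   Context: For a Banach algebra $A$ and a Banach $A$-bimodule $X$, a derivation is a linear map $D:A\to X$ with $D(ab)=a\cdot D(b)+D(a)\cdot b$. A continuous derivation $D:A\to X$ is approximately semi-inner if there are nets $(\xi_i),(\eta_i)$ in $X$ (over the same directed set) with $D(a)=\lim_i(a\cdot\xi_i-\eta_i\cdot a)$ in norm for every $a\in A$; it is approximately inner if there is a net $(\xi_i)$ in $X$ with $D(a)=\lim_i(a\cdot\xi_i-\xi_i\cdot a)$ in norm for every $a\in A$. A central bounded approximate identity is a bounded net $(e_\alpha)$ of elements of the centre of $A$ with $e_\alpha a\to a$ for all $a\in A$. *)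

(* Defs.v *)
From HB Require Import structures.
From mathcomp Require Import all_boot all_order all_algebra.
From mathcomp Require Import all_classical all_reals all_analysis.
Set Implicit Arguments. Unset Strict Implicit. Unset Printing Implicit Defensive.
Import Order.TTheory GRing.Theory Num.Theory.
Import numFieldNormedType.Exports.
Local Open Scope ring_scope.

Definition directed_set (I : Type) (le : I -> I -> Prop) : Prop :=
  (inhabited I /\ (forall i, le i i) /\ (forall i j k, le i j -> le j k -> le i k) /\ (forall i j, exists k, le i k /\ le j k)).

Definition net_cvg (K : numFieldType) (V : normedModType K)
  (I : Type) (le : I -> I -> Prop) (x : I -> V) (l : V) : Prop :=
  forall eps : K, 0 < eps ->
    exists i0 : I, forall i, le i0 i -> `|x i - l| < eps.

Definition banach_algebra (K : numFieldType) (A : completeNormedModType K)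
  (mul : A -> A -> A) : Prop :=
  ((forall a b c, mul a (mul b c) = mul (mul a b) c) /\ (forall a b c, mul (a + b) c = mul a c + mul b c) /\ (forall a b c, mul a (b + c) = mul a b + mul a c) /\ (forall (k : K) a b, mul (k *: a) b = k *: mul a b) /\ (forall (k : K) a b, mul a (k *: b) = k *: mul a b) /\ (forall a b, `|mul a b| <= `|a| * `|b|)).

Definition banach_bimodule (K : numFieldType) (A : completeNormedModType K)
  (mul : A -> A -> A) (X : completeNormedModType K)
  (lact : A -> X -> X) (ract : X -> A -> X) : Prop :=
  ((forall a b x, lact a (lact b x) = lact (mul a b) x) /\ (forall x a b, ract (ract x a) b = ract x (mul a b)) /\ (forall a x b, ract (lact a x) b = lact a (ract x b)) /\ (forall a b x, lact (a + b) x = lact a x + lact b x) /\ (forall a x y, lact a (x + y) = lact a x + lact a y) /\ (forall x a b, ract x (a + b) = ract x a + ract x b) /\ (forall x y a, ract (x + y) a = ract x a + ract y a) /\ (forall (k : K) a x, lact (k *: a) x = k *: lact a x /\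
                           lact a (k *: x) = k *: lact a x) /\ (forall (k : K) x a, ract x (k *: a) = k *: ract x a /\
                           ract (k *: x) a = k *: ract x a) /\ (exists C : K, 0 < C /\ forall a x,
         `|lact a x| <= C * `|a| * `|x| /\ `|ract x a| <= C * `|a| * `|x|)).

Definition derivation (K : numFieldType) (A : completeNormedModType K)
  (mul : A -> A -> A) (X : completeNormedModType K)
  (lact : A -> X -> X) (ract : X -> A -> X) (D : A -> X) : Prop :=
  ((forall a b, D (a + b) = D a + D b) /\ (forall (k : K) a, D (k *: a) = k *: D a) /\ (forall a b, D (mul a b) = lact a (D b) + ract (D a) b)).

Definition approx_semi_inner (K : numFieldType) (A : completeNormedModType K)
  (X : completeNormedModType K)
  (lact : A -> X -> X) (ract : X -> A -> X) (D : A -> X) : Prop :=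
  exists (I : Type) (le : I -> I -> Prop) (xi eta : I -> X),
    directed_set le /\
    forall a : A, net_cvg le (fun i => lact a (xi i) - ract (eta i) a) (D a).

Definition approx_inner (K : numFieldType) (A : completeNormedModType K)
  (X : completeNormedModType K)
  (lact : A -> X -> X) (ract : X -> A -> X) (D : A -> X) : Prop :=
  exists (I : Type) (le : I -> I -> Prop) (xi : I -> X),
    directed_set le /\
    forall a : A, net_cvg le (fun i => lact a (xi i) - ract (xi i) a) (D a).

Definition has_central_bai (K : numFieldType) (A : completeNormedModType K)
  (mul : A -> A -> A) : Prop :=
  exists (I : Type) (le : I -> I -> Prop) (e : I -> A),
    (directed_set le /\ (forall i a, mul (e i) a = mul a (e i)) /\ (exists M : K, forall i, `|e i| <= M) /\ (forall a, net_cvg le (fun i => mul (e i) a) a)).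

Definition unital (K : numFieldType) (A : completeNormedModType K)
  (mul : A -> A -> A) : Prop :=
  exists u : A, forall a, mul u a = a /\ mul a u = a.

(* Main.v *)
Require Import Defs.
From HB Require Import structures.
From mathcomp Require Import all_boot all_order all_algebra.
From mathcomp Require Import all_classical all_reals all_analysis.
Import numFieldNormedType.Exports.
Import Order.TTheory GRing.Theory Num.Theory.
Local Open Scope classical_set_scope.
Local Open Scope ring_scope.
Set Implicit Arguments.
Inductive zexp := ZAt of nat | ZAdd of zexp & zexp | ZOpp of zexp | Z0.
Fixpoint zev (V : zmodType) (env : seq V) (e : zexp) : V :=
  match e with
  | ZAt n => nth 0 env n
  | ZAdd a b => zev V env a + zev V env b
  | ZOpp a => - zev V env a
  | Z0 => 0
  end.
Arguments zev {V}.
Fixpoint zco (e : zexp) (k : nat) : int :=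
  match e with
  | ZAt n => if n == k then 1 else 0
  | ZAdd a b => zco a k + zco b k
  | ZOpp a => - zco a k
  | Z0 => 0
  end.
Fixpoint zb (e : zexp) : nat :=
  match e with
  | ZAt n => n.+1
  | ZAdd a b => maxn (zb a) (zb b)
  | ZOpp a => zb a
  | Z0 => 0
  end.
Lemma zevE (V : zmodType) (env : seq V) e N : (zb e <= N)%N ->
  zev env e = \sum_(k < N) nth 0 env k *~ zco e k.
Proof.
elim: e => [n|a iha b ihb|a iha|] /= hN.
- rewrite (bigD1 (Ordinal hN)) //= eqxx mulr1z big1 ?addr0 // => k /negbTE.
  have -> : (n == k) = (Ordinal hN == k) by [].
  by rewrite eq_sym => ->; rewrite mulr0z.
- rewrite geq_max in hN; case/andP: hN => ha hb.
  by rewrite iha // ihb // -big_split /=; apply: eq_bigr => k _; rewrite mulrzDr_tmp.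
- by rewrite iha // -sumrN; apply: eq_bigr => k _; rewrite mulrNz.
- by rewrite big1 // => k _; rewrite mulr0z.
Qed.
Definition zcheck e1 e2 :=
  seq.all (fun k => zco e1 k == zco e2 k) (seq.iota 0 (maxn (zb e1) (zb e2))).
Lemma zev_eq (V : zmodType) (env : seq V) e1 e2 : zcheck e1 e2 ->
  zev env e1 = zev env e2.
Proof.
move=> /allP h.
rewrite (@zevE _ _ e1 (maxn (zb e1) (zb e2))) ?leq_maxl //.
rewrite (@zevE _ _ e2 (maxn (zb e1) (zb e2))) ?leq_maxr //.
apply: eq_bigr => k _; have := h k; rewrite mem_iota add0n ltn_ord => /(_ isT) /eqP -> //.
Qed.

Ltac zfind t env :=
  match env with
  | cons t _ => constr:(0%N)
  | cons _ ?tl => let n := zfind t tl in constr:(S n)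
  end.
Ltac zapp env t :=
  lazymatch env with
  | nil => constr:(cons t env)
  | cons ?h ?tl => let r := zapp tl t in constr:(cons h r)
  end.
Ltac zlen env :=
  lazymatch env with
  | nil => constr:(0%N)
  | cons _ ?tl => let n := zlen tl in constr:(S n)
  end.
Ltac zreify env t :=
  match t with
  | @GRing.add _ ?a ?b =>
      let r := zreify env a in
      lazymatch r with (?ea, ?env1) =>
        let r2 := zreify env1 b in
        lazymatch r2 with (?eb, ?env2) => constr:((ZAdd ea eb, env2)) end end
  | @GRing.opp _ ?a =>
      let r := zreify env a in
      lazymatch r with (?ea, ?env1) => constr:((ZOpp ea, env1)) end
  | @GRing.zero _ => constr:((Z0, env))
  | _ => let n := (zfind t env) in constr:((ZAt n, env))
  | _ => let n := zlen env in let env' := zapp env t in constr:((ZAt n, env'))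
  end.
Ltac abel :=
  lazymatch goal with
  | |- @eq ?T ?l ?r =>
    let env0 := constr:(@nil T) in
    let r1 := zreify env0 l in
    lazymatch r1 with (?el, ?env1) =>
      let r2 := zreify env1 r in
      lazymatch r2 with (?er, ?env2) =>
        change (zev env2 el = zev env2 er); apply: zev_eq; vm_compute; reflexivity
      end end
  end.


Lemma cont0 (K : numFieldType) (V W : normedModType K) (f : V -> W) :
  f 0 = 0 -> continuous f ->
  forall eps : K, 0 < eps -> exists2 d : K, 0 < d & forall x, `|x| < d -> `|f x| < eps.
Proof.
move=> f0 fc eps he.
have h : f @ (nbhs (0:V)) --> (0:W) by rewrite -[X in _ --> X]f0; exact: fc.
move: h => /cvgr0_norm_lt /(_ eps he).
by move/nbhs_norm0P => [d /= d0 hd]; exists d.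
Qed.

Lemma addfB (U V : zmodType) (f : U -> V) :
  (forall x y, f (x + y) = f x + f y) -> forall x y, f (x - y) = f x - f y.
Proof.
move=> h x y; apply/eqP; rewrite eq_sym subr_eq -h subrK //.
Qed.
Lemma addf0 (U V : zmodType) (f : U -> V) :
  (forall x y, f (x + y) = f x + f y) -> f 0 = 0.
Proof. by move=> h; have := @addfB _ _ _ h 0 0; rewrite !subrr. Qed.
Lemma addfN (U V : zmodType) (f : U -> V) :
  (forall x y, f (x + y) = f x + f y) -> forall x, f (- x) = - f x.
Proof. by move=> h x; rewrite -sub0r (@addfB _ _ _ h) (@addf0 _ _ _ h) sub0r. Qed.

Lemma ev_and (I : Type) (le : I -> I -> Prop) (P Q : I -> Prop) :
  directed_set le -> (exists i0, forall i, le i0 i -> P i) ->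
  (exists i0, forall i, le i0 i -> Q i) ->
  exists i0, forall i, le i0 i -> P i /\ Q i.
Proof.
move=> [_ [_ [tr up]]] [i1 h1] [i2 h2]; have [k [k1 k2]] := up i1 i2.
by exists k => i hi; split; [apply: h1; exact: tr _ _ _ k1 hi|apply: h2; exact: tr _ _ _ k2 hi].
Qed.

Lemma ev_seq (T : eqType) (I : Type) (le : I -> I -> Prop) (P : T -> I -> Prop)
  (s : seq T) : directed_set le ->
  (forall a, a \in s -> exists i0, forall i, le i0 i -> P a i) ->
  exists i0, forall i, le i0 i -> forall a, a \in s -> P a i.
Proof.
move=> dI; elim: s => [|b s ih] h.
  by case: dI => [[i0] _]; exists i0 => i _ a.
have [|i0 hi0] := @ev_and _ _ _ _ dI (h b (mem_head _ _)) (ih _).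
  by move=> a ha; apply: h; rewrite in_cons ha orbT.
exists i0 => i hi a; rewrite in_cons => /orP [/eqP -> | ha].
  by case: (hi0 i hi).
by case: (hi0 i hi) => _; apply.
Qed.

Lemma half_gt0 (K : numFieldType) (eps : K) : 0 < eps -> 0 < eps / 2%:R.
Proof. by move=> he; rewrite divr_gt0 // ltr0n. Qed.

Lemma cvg_add (K : numFieldType) (V : normedModType K) (I : Type) (le : I -> I -> Prop)
  (x y : I -> V) (l m : V) : directed_set le ->
  net_cvg le x l -> net_cvg le y m -> net_cvg le (fun i => x i + y i) (l + m).
Proof.
move=> dI hx hy eps he.
have [i0 hi0] := @ev_and _ _ _ _ dI (hx _ (@half_gt0 _ _ he)) (hy _ (@half_gt0 _ _ he)).
exists i0 => i /hi0 [h1 h2].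
rewrite opprD addrACA (splitr eps).
exact: le_lt_trans (ler_normD _ _) (ltrD h1 h2).
Qed.

Lemma cvg_opp (K : numFieldType) (V : normedModType K) (I : Type) (le : I -> I -> Prop)
  (x : I -> V) (l : V) : net_cvg le x l -> net_cvg le (fun i => - x i) (- l).
Proof.
move=> hx eps he; have [i0 hi0] := hx _ he; exists i0 => i /hi0.
by rewrite -opprD normrN.
Qed.

Lemma cvg_ext (K : numFieldType) (V : normedModType K) (I : Type) (le : I -> I -> Prop)
  (x y : I -> V) (l m : V) : (forall i, x i = y i) -> l = m ->
  net_cvg le x l -> net_cvg le y m.
Proof.
move=> h <- hx eps he; have [i0 hi0] := hx _ he; exists i0 => i /hi0.
by rewrite h.
Qed.

Lemma cvg_const (K : numFieldType) (V : normedModType K) (I : Type) (le : I -> I -> Prop)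
  (l : V) : directed_set le -> net_cvg le (fun _ => l) l.
Proof.
by move=> [[i0] _] eps he; exists i0 => i _; rewrite subrr normr0.
Qed.

Lemma cvg_dom (K : numFieldType) (V W : normedModType K) (I : Type) (le : I -> I -> Prop)
  (x : I -> V) (y : I -> W) (c : K) : 0 <= c ->
  (forall i, `|y i| <= c * `|x i|) ->
  net_cvg le x 0 -> net_cvg le y 0.
Proof.
move=> c0 hxy hx eps he.
have c1 : 0 < c + 1 by apply: ltr_wpDl => //; exact: ltr01.
have [i0 hi0] := hx (eps / (c + 1)) (divr_gt0 he c1).
exists i0 => i /hi0; rewrite !subr0 => h.
apply: le_lt_trans (hxy i) _.
apply: le_lt_trans (_ : c * `|x i| <= (c + 1) * `|x i|) _.
  by apply: ler_wpM2r => //; rewrite lerDl ler01.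
have -> : eps = (c + 1) * (eps / (c + 1)) by rewrite mulrC divfK // lt0r_neq0.
by rewrite ltr_pM2l.
Qed.

Lemma cvg_to0 (K : numFieldType) (V : normedModType K) (I : Type) (le : I -> I -> Prop)
  (x : I -> V) (l : V) : net_cvg le x l <-> net_cvg le (fun i => x i - l) 0.
Proof.
by split=> h eps he; have [i0 hi0] := h _ he; exists i0 => i /hi0; rewrite subr0.
Qed.

Lemma cvg_lin (K : numFieldType) (V W : normedModType K) (I : Type) (le : I -> I -> Prop)
  (f : V -> W) (c : K) (x : I -> V) (l : V) :
  (forall u v, f (u + v) = f u + f v) -> 0 <= c -> (forall v, `|f v| <= c * `|v|) ->
  net_cvg le x l -> net_cvg le (fun i => f (x i)) (f l).
Proof.
move=> fa c0 fb /cvg_to0 hx; apply/cvg_to0.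
apply: (@cvg_dom _ _ _ _ _ (fun i => x i - l) _ c c0 _ hx) => i.
by rewrite -(@addfB _ _ _ fa).
Qed.

Definition zet (K : numFieldType) (A X : normedModType K) (lact : A -> X -> X)
  (ract : X -> A -> X) (c : A) (x y : X) := lact c x + ract y c - lact c (ract y c).
Definition Tm (K : numFieldType) (A X : normedModType K) (lact : A -> X -> X)
  (ract : X -> A -> X) (c : A) (d : X) := lact c d + ract d c - lact c (ract d c).
Arguments zet {K A X}.
Arguments Tm {K A X}.

Lemma part_i (K : numFieldType) (A : completeNormedModType K) (mul : A -> A -> A)
  (X : completeNormedModType K) (lact : A -> X -> X) (ract : X -> A -> X) (D : A -> X)
  (hA : banach_algebra mul) (hX : banach_bimodule mul lact ract)
  (hD : derivation mul lact ract D)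
  (I : Type) (le : I -> I -> Prop) (xi eta : I -> X) (dI : directed_set le)
  (hsi : forall a, net_cvg le (fun i => lact a (xi i) - ract (eta i) a) (D a))
  (c : A) (cen : forall a, mul c a = mul a c) (a : A) :
  net_cvg le (fun i => lact a (zet lact ract c (xi i) (eta i))
                       - ract (zet lact ract c (xi i) (eta i)) a) (Tm lact ract c (D a)).
Proof.
case: hA => [mA [mDl [mDr [mZl [mZr mN]]]]].
case: hX => [lA [rA [lrA [lDl [lDr [rDr [rDl [lZ [rZ [C [C0 hC]]]]]]]]]]].
case: hD => [DD [DZ Dm]].
have lBr : forall a x y, lact a (x - y) = lact a x - lact a y :=
  fun a => @addfB _ _ _ (lDr a).
have rBl : forall a x y, ract (x - y) a = ract x a - ract y a :=
  fun a => @addfB _ _ _ (fun x y => rDl x y a).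
have l0 : forall a, lact a 0 = 0 := fun a => @addf0 _ _ _ (lDr a).
have lNr : forall a x, lact a (- x) = - lact a x := fun a => @addfN _ _ _ (lDr a).
have rNl : forall a x, ract (- x) a = - ract x a :=
  fun a => @addfN _ _ _ (fun x y => rDl x y a).
have C0' : 0 <= C by exact: ltW.
have bl : forall b, 0 <= C * `|b| /\ forall x, `|lact b x| <= C * `|b| * `|x|.
  by move=> b; split; [rewrite mulr_ge0 | move=> x; case: (hC b x)].
have br : forall b, 0 <= C * `|b| /\ forall x, `|ract x b| <= C * `|b| * `|x|.
  by move=> b; split; [rewrite mulr_ge0 | move=> x; case: (hC b x)].
have cl : forall b (y : I -> X) l, net_cvg le y l ->
    net_cvg le (fun i => lact b (y i)) (lact b l).
  by move=> b y l hy; case: (bl b) => h1 h2; exact: (@cvg_lin _ _ _ _ _ (lact b) _ _ _ (lDr b) h1 h2 hy).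
have cr : forall b (y : I -> X) l, net_cvg le y l ->
    net_cvg le (fun i => ract (y i) b) (ract l b).
  move=> b y l hy; case: (br b) => h1 h2.
  exact: (@cvg_lin _ _ _ _ _ (fun x => ract x b) _ _ _ (fun x y => rDl x y b) h1 h2 hy).
have cs : forall (y z : I -> X) l m, net_cvg le y l -> net_cvg le z m ->
    net_cvg le (fun i => y i - z i) (l - m).
  by move=> y z l m hy hz; apply: cvg_add => //; exact: cvg_opp.
have cT : forall (y : I -> X) l, net_cvg le y l ->
    net_cvg le (fun i => Tm lact ract c (y i)) (Tm lact ract c l).
  move=> y l hy; rewrite /Tm; apply: cs; first by apply: cvg_add => //; [exact: cl|exact: cr].
  by apply: cl; exact: cr.
pose Y x i := lact x (xi i) - ract (eta i) x.
have hG := cT _ _ (hsi a).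
have hP : net_cvg le (fun i => lact c (Y a i) + ract (Y c i) a - Y (mul c a) i) 0.
  have H : net_cvg le (fun i => lact c (Y a i) + ract (Y c i) a - Y (mul c a) i)
      (lact c (D a) + ract (D c) a - D (mul c a)).
    apply: cs; last exact: hsi.
    by apply: cvg_add => //; [exact: cl (hsi _)|exact: cr (hsi _)].
  by rewrite Dm subrr in H.
have hQ : net_cvg le (fun i => lact a (Y c i) + ract (Y a i) c - Y (mul a c) i) 0.
  have H : net_cvg le (fun i => lact a (Y c i) + ract (Y a i) c - Y (mul a c) i)
      (lact a (D c) + ract (D a) c - D (mul a c)).
    apply: cs; last exact: hsi.
    by apply: cvg_add => //; [exact: cl (hsi _)|exact: cr (hsi _)].
  by rewrite Dm subrr in H.
have hQ' := cl c _ _ hQ; rewrite l0 in hQ'.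
have hF := cvg_add dI (cs _ _ _ _ (cs _ _ _ _ hG hP) hQ) hQ'.
apply: (@cvg_ext _ _ _ _ _ _ _ _ _ _ hF); last by rewrite !subr0 addr0.
move=> i; rewrite /Tm /zet /Y.
have h1 : forall z, lact a (lact c z) = lact c (lact a z) by move=> z; rewrite !lA cen.
have h2 : forall z, ract (ract z c) a = ract (ract z a) c by move=> z; rewrite !rA cen.
rewrite !(lDr, lBr, rDl, rBl, lNr, rNl) -!lA -!rA !lrA !h1 !h2.
abel.
Qed.

Lemma cont_bnd (K : numFieldType) (V W : normedModType K) (f : V -> W) :
  (forall x y, f (x + y) = f x + f y) -> (forall (k : K) x, f (k *: x) = k *: f x) ->
  continuous f -> exists2 B : K, 0 <= B & forall x, `|f x| <= B * (`|x| + 1).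
Proof.
move=> fa fz fc; have [d d0 hd] := @cont0 _ _ _ f (@addf0 _ _ _ fa) fc 1 ltr01.
exists d^-1; first by rewrite invr_ge0 ltW.
move=> x; set n := `|x| + 1.
have n0 : 0 < n by rewrite /n ltr_wpDl // ltr01.
set k := d / n; have k0 : 0 < k by rewrite divr_gt0.
have : `|f (k *: x)| < 1.
  apply: hd; rewrite normrZ gtr0_norm // /k mulrAC ltr_pdivrMr // ltr_pM2l //.
  by rewrite /n ltrDl ltr01.
rewrite fz normrZ gtr0_norm // => h.
rewrite -ltr_pdivlMl // mulr1 /k invf_div in h.
by rewrite mulrC ltW.
Qed.

Lemma cvg_cont0 (K : numFieldType) (V W : normedModType K) (I : Type) (le : I -> I -> Prop)
  (f : V -> W) (x : I -> V) : f 0 = 0 -> continuous f ->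
  net_cvg le x 0 -> net_cvg le (fun i => f (x i)) 0.
Proof.
move=> f0 fc hx eps he; have [d d0 hd] := @cont0 _ _ _ f f0 fc eps he.
have [i0 hi0] := hx d d0; exists i0 => i /hi0; rewrite !subr0; exact: hd.
Qed.

Lemma part_ii (K : numFieldType) (A : completeNormedModType K) (mul : A -> A -> A)
  (X : completeNormedModType K) (lact : A -> X -> X) (ract : X -> A -> X) (D : A -> X)
  (hA : banach_algebra mul) (hX : banach_bimodule mul lact ract)
  (hD : derivation mul lact ract D) (Dc : continuous D)
  (J : Type) (leJ : J -> J -> Prop) (e : J -> A) (dJ : directed_set leJ)
  (cen : forall j a, mul (e j) a = mul a (e j)) (M : K) (hM : forall j, `|e j| <= M)
  (bai : forall a, net_cvg leJ (fun j => mul (e j) a) a) (a : A) :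
  net_cvg leJ (fun j => Tm lact ract (e j) (D a)) (D a).
Proof.
case: hA => [mA [mDl [mDr [mZl [mZr mN]]]]].
case: hX => [lA [rA [lrA [lDl [lDr [rDr [rDl [lZ [rZ [C [C0 hC]]]]]]]]]]].
case: hD => [DD [DZ Dm]].
have lBr : forall a x y, lact a (x - y) = lact a x - lact a y :=
  fun a => @addfB _ _ _ (lDr a).
have lBl : forall x a b, lact (a - b) x = lact a x - lact b x :=
  fun x => @addfB _ _ _ (fun a b => lDl a b x).
have rBr : forall x a b, ract x (a - b) = ract x a - ract x b :=
  fun x => @addfB _ _ _ (rDr x).
have mBr : forall c a b, mul c (a - b) = mul c a - mul c b :=
  fun c => @addfB _ _ _ (mDr c).
have DB := @addfB _ _ _ DD.
have DN := @addfN _ _ _ DD.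
have lNr : forall a x, lact a (- x) = - lact a x := fun a => @addfN _ _ _ (lDr a).
have M0 : 0 <= M by case: dJ => [[j0] _]; exact: le_trans (normr_ge0 _) (hM j0).
have [B B0 hB] := cont_bnd DD DZ Dc.
have hDe : forall j, `|D (e j)| <= B * (M + 1).
  by move=> j; apply: le_trans (hB _) _; rewrite ler_wpM2l // lerD2r.
pose w j := a - mul (e j) a.
have hw : net_cvg leJ w 0.
  have := cvg_opp ((cvg_to0 _ _ _ _).1 (bai a)).
  by apply: cvg_ext => [j|]; rewrite ?opprB ?oppr0.
have hew : net_cvg leJ (fun j => mul (e j) (w j)) 0.
  apply: (@cvg_dom _ _ _ _ _ w _ M M0 _ hw) => j.
  by apply: le_trans (mN _ _) _; rewrite ler_wpM2r.
have cB : 0 <= C * (B * (M + 1)).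
  by apply: mulr_ge0; [exact: ltW | apply: mulr_ge0 => //; exact: addr_ge0].
have hr : net_cvg leJ (fun j => ract (D (e j)) (w j)) 0.
  apply: (@cvg_dom _ _ _ _ _ w _ _ cB _ hw) => j.
  case: (hC (w j) (D (e j))) => _ h; apply: le_trans h _.
  by rewrite mulrAC ler_wpM2r // ler_wpM2l // ltW.
have hl : net_cvg leJ (fun j => lact (w j) (D (e j))) 0.
  apply: (@cvg_dom _ _ _ _ _ w _ _ cB _ hw) => j.
  case: (hC (w j) (D (e j))) => h _; apply: le_trans h _.
  by rewrite mulrAC ler_wpM2r // ler_wpM2l // ltW.
have hd : net_cvg leJ (fun j => D (w j - mul (e j) (w j))) 0.
  apply: cvg_cont0 => //; first exact: (@addf0 _ _ _ DD).
  have := cvg_add dJ hw (cvg_opp hew); rewrite oppr0 addr0; exact.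
have hs := cvg_add dJ (cvg_add dJ hd hr) hl; rewrite !addr0 in hs.
apply/cvg_to0; have := cvg_opp hs; rewrite oppr0; apply: cvg_ext => // j.
have E : ract (D a) (e j) = lact (e j) (D a) + ract (D (e j)) a - lact a (D (e j)).
  by rewrite -Dm cen Dm addrC addKr.
rewrite /Tm /w E !(lDr, lBr, lBl, rBr, DB, DN, mBr, Dm, DD, lNr) !lA.
abel.
Qed.

Lemma key (K : numFieldType) (A : completeNormedModType K) (mul : A -> A -> A)
  (X : completeNormedModType K) (lact : A -> X -> X) (ract : X -> A -> X) (D : A -> X)
  (hA : banach_algebra mul) (hX : banach_bimodule mul lact ract)
  (hD : derivation mul lact ract D) (Dc : continuous D)
  (J : Type) (leJ : J -> J -> Prop) (e : J -> A) (dJ : directed_set leJ)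
  (cen : forall j a, mul (e j) a = mul a (e j)) (M : K) (hM : forall j, `|e j| <= M)
  (bai : forall a, net_cvg leJ (fun j => mul (e j) a) a)
  (I : Type) (le : I -> I -> Prop) (xi eta : I -> X) (dI : directed_set le)
  (hsi : forall a, net_cvg le (fun i => lact a (xi i) - ract (eta i) a) (D a))
  (F : seq A) (eps : K) : 0 < eps ->
  exists z : X, forall a, a \in F -> `|lact a z - ract z a - D a| < eps.
Proof.
move=> he; have he2 := @half_gt0 _ _ he.
have [j0 hj0] := @ev_seq _ _ leJ
  (fun a j => `|Tm lact ract (e j) (D a) - D a| < eps / 2%:R) F dJ
  (fun a _ => @part_ii K A mul X lact ract D hA hX hD Dc J leJ e dJ cen M hM bai a _ he2).
have hj := hj0 j0 (proj1 (proj2 dJ) j0).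
have [i0 hi0] := @ev_seq _ _ le
  (fun a i => `|lact a (zet lact ract (e j0) (xi i) (eta i))
               - ract (zet lact ract (e j0) (xi i) (eta i)) a
               - Tm lact ract (e j0) (D a)| < eps / 2%:R) F dI
  (fun a _ => @part_i K A mul X lact ract D hA hX hD I le xi eta dI hsi (e j0) (cen j0) a _ he2).
have hi := hi0 i0 (proj1 (proj2 dI) i0).
exists (zet lact ract (e j0) (xi i0) (eta i0)) => a ha.
set x := lact a _ - _.
have -> : x - D a = (x - Tm lact ract (e j0) (D a)) + (Tm lact ract (e j0) (D a) - D a).
  by rewrite addrA subrK.
rewrite (splitr eps); apply: le_lt_trans (ler_normD _ _) _.
by apply: ltrD; [exact: hi|exact: hj].
Qed.

Lemma main_bai (K : numFieldType) (A : completeNormedModType K) (mul : A -> A -> A) :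
  banach_algebra mul -> has_central_bai mul ->
  forall (X : completeNormedModType K) (lact : A -> X -> X)
         (ract : X -> A -> X) (D : A -> X),
    banach_bimodule mul lact ract ->
    derivation mul lact ract D -> continuous D ->
    approx_semi_inner lact ract D -> approx_inner lact ract D.
Proof.
move=> hA [J [leJ [e [dJ [cen [[M hM] bai]]]]]] X lact ract D hX hD Dc
  [I [le [xi [eta [dI hsi]]]]].
pose P := (seq A * K)%type.
pose leP (p q : P) := {subset p.1 <= q.1} /\ (0 < p.2 -> 0 < q.2 /\ q.2 <= p.2).
have hz : forall p : P, exists z : X,
    0 < p.2 -> forall a, a \in p.1 -> `|lact a z - ract z a - D a| < p.2.
  move=> [F eps] /=; case: (boolP (0 < eps)) => he.
    have [z hz] := @key K A mul X lact ract D hA hX hD Dc J leJ e dJ cen M hM bai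
      I le xi eta dI hsi F eps he.
    by exists z.
  by exists 0 => h; move/negP: he.
have [z hzP] := boolp.choice hz.
exists P, leP, z; split.
  split; first by constructor; exact: ([::], 1).
  split; first by move=> p; split=> // h; split.
  split.
    move=> p q r [pq1 pq2] [qr1 qr2]; split; first by move=> x /pq1 /qr1.
    move=> /pq2 [q0 qp]; have [r0 rq] := qr2 q0; split=> //; exact: le_trans rq qp.
  move=> [F1 e1] [F2 e2] /=.
  pose g := if (0 < e1) && (0 < e2) then (if e1 <= e2 then e1 else e2)
            else if 0 < e1 then e1 else if 0 < e2 then e2 else 1.
  have s1 : {subset F1 <= F1 ++ F2} by move=> x hx; rewrite mem_cat hx.
  have s2 : {subset F2 <= F1 ++ F2} by move=> x hx; rewrite mem_cat hx orbT.
  exists (F1 ++ F2, g); rewrite /leP /=; split; split=> // h0;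
  rewrite /g; case: (boolP (0 < e1)) => h1; case: (boolP (0 < e2)) => h2 //=;
  rewrite ?h0 in h1 h2 *; try by [];
  case: ifP => hle //; split => //;
  by rewrite ltW // real_ltNge ?gtr0_real // hle.
move=> a eps he; exists ([:: a], eps) => -[F d] [/= sF hd].
have [d0 de] := hd he.
have := hzP (F, d) d0 a (sF a (mem_head _ _)).
by move=> h; exact: lt_le_trans h de.
Qed.

Theorem proposition2p4 (K : numFieldType) (A : completeNormedModType K)
  (mul : A -> A -> A) :
  banach_algebra mul ->
  (has_central_bai mul ->
     forall (X : completeNormedModType K) (lact : A -> X -> X)
            (ract : X -> A -> X) (D : A -> X),
       banach_bimodule mul lact ract ->
       derivation mul lact ract D -> continuous D ->
       approx_semi_inner lact ract D -> approx_inner lact ract D)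
  /\
  (unital mul ->
     forall (X : completeNormedModType K) (lact : A -> X -> X)
            (ract : X -> A -> X) (D : A -> X),
       banach_bimodule mul lact ract ->
       derivation mul lact ract D -> continuous D ->
       approx_semi_inner lact ract D -> approx_inner lact ract D).
Proof.
move=> hA; split; first exact: main_bai.
move=> [u hu]; apply: main_bai => //.
exists unit, (fun _ _ => True), (fun _ => u); split.
  split; first by constructor; exact: tt.
  by split=> //; split=> // i j; exists tt.
split; first by move=> _ a; case: (hu a) => -> ->.
split; first by exists `|u|.
move=> a eps he; exists tt => _ _; case: (hu a) => -> _.
by rewrite subrr normr0.
Qed.
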